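(* There exist $p,k,E$ and source covariance matrices $\Sigma_1,\dots,\Sigma_E$ such that every matrix $V^{\mathrm{seq}}=[v_1,\dots,v_k]$ produced by the sequential procedure below fails to solve rank-$k$ minPCA. The sequential procedure chooses orthonormal vectors with $v_1\in\arg\max_{v\in\mathbb{R}^p,\|v\|=1}\min_{e\in\mathcal{E}}\mathcal{L}_{\mathrm{var}}(v;\Sigma_e)$ and, for $2\le j\le k$, $v_j\in\arg\max\{\min_{e\in\mathcal{E}}\mathcal{L}_{\mathrm{var}}([v_1,\dots,v_{j-1},v];\Sigma_e): v\in\mathbb{R}^p,\ \|v\|=1,\ v\perp v_i\ \forall i<j\}$.
   Context: $\mathcal{O}_{p\times k}=\{V\in\mathbb{R}^{p\times k}:V^\top V=I_k\}$; source domains $\mathcal{E}=\{1,\dots,E\}$ with symmetric positive semidefinite covariances $\Sigma_e$ of positive trace. $\mathcal{L}_{\mathrm{var}}(V;\Sigma)=\operatorname{Tr}(V^\top\Sigma V)$ for any $V$ with orthonormal columns. $V^*$ solves rank-$k$ minPCA if $V^*\in\arg\max_{V\in\mathcal{O}_{p\times k}}\min_{e\in\mathcal{E}}\mathcal{L}_{\mathrm{var}}(V;\Sigma_e)$. *)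

(* Defs.v *)
From HB Require Import structures.
From mathcomp Require Import all_boot all_order all_algebra.
From mathcomp Require Import Rstruct.
From Stdlib Require Import Rdefinitions.
Set Implicit Arguments. Unset Strict Implicit. Unset Printing Implicit Defensive.
Import Order.TTheory GRing.Theory Num.Theory.
Local Open Scope ring_scope.

Definition orthonormal (p m : nat) (V : 'M[R]_(p, m)) : Prop :=
  V^T *m V = 1%:M.

Definition Lvar (p m : nat) (V : 'M[R]_(p, m)) (S : 'M[R]_p) : R :=
  \tr (V^T *m S *m V).

(* min over the E.+1 source domains {0,...,E} of L_var(V; Sigma_e). *)
Definition minLvar (p m E : nat) (Sig : 'I_E.+1 -> 'M[R]_p) (V : 'M[R]_(p, m)) : R :=
  \big[Num.min/Lvar V (Sig ord0)]_(e < E.+1) Lvar V (Sig e).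

Definition valid_cov (p : nat) (S : 'M[R]_p) : Prop :=
  S^T = S /\ (forall x : 'cV[R]_p, 0 <= (x^T *m S *m x) 0 0) /\ 0 < \tr S.

Definition minPCA_sol (p k E : nat) (Sig : 'I_E.+1 -> 'M[R]_p) (V : 'M[R]_(p, k)) : Prop :=
  orthonormal V /\
  forall W : 'M[R]_(p, k), orthonormal W -> minLvar Sig W <= minLvar Sig V.

(* [v_1, ..., v_{j-1}, v] (0-based: the first j columns of V followed by v),
   a p x (j+1) matrix. *)
Definition prefix_with (p k : nat) (V : 'M[R]_(p, k)) (j : 'I_k) (v : 'cV[R]_p)
  : 'M[R]_(p, j.+1) :=
  \matrix_(a < p, b < j.+1)
     if (b < j)%nat then V a (widen_ord (ltn_ord j) b) else v a 0.

Definition admissible (p k : nat) (V : 'M[R]_(p, k)) (j : 'I_k) (v : 'cV[R]_p) : Prop :=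
  v^T *m v = 1%:M /\ forall i : 'I_k, (i < j)%nat -> v^T *m col i V = 0.

Definition sequential_output (p k E : nat) (Sig : 'I_E.+1 -> 'M[R]_p)
  (V : 'M[R]_(p, k)) : Prop :=
  forall j : 'I_k,
    admissible V j (col j V) /\
    forall v : 'cV[R]_p, admissible V j v ->
      minLvar Sig (prefix_with V j v) <= minLvar Sig (prefix_with V j (col j V)).

(* Main.v *)
Require Import Defs.
From HB Require Import structures.
From mathcomp Require Import all_boot all_order all_algebra.
From mathcomp Require Import Rstruct.
From Stdlib Require Import Rdefinitions.
From mathcomp Require Import ring lra.
Import Order.TTheory GRing.Theory Num.Theory.
Local Open Scope ring_scope.

Definition i0 : 'I_3 := @Ordinal 3 0 isT.
Definition i1 : 'I_3 := @Ordinal 3 1 isT.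
Definition i2 : 'I_3 := @Ordinal 3 2 isT.
Definition c0 : 'I_2 := @Ordinal 2 0 isT.
Definition c1 : 'I_2 := @Ordinal 2 1 isT.

Lemma sum3 (f : 'I_3 -> R) : \sum_(i < 3) f i = f i0 + f i1 + f i2.
Proof.
rewrite !big_ord_recr big_ord0 /= add0r.
by congr (f _ + f _ + f _); apply: val_inj.
Qed.

Lemma sum2 (f : 'I_2 -> R) : \sum_(i < 2) f i = f c0 + f c1.
Proof.
rewrite !big_ord_recr big_ord0 /= add0r.
by congr (f _ + f _); apply: val_inj.
Qed.

Definition wv (w0 w1 : R) (i : 'I_3) : R :=
  if val i == 0%N then w0 else if val i == 1%N then w1 else 0.

Definition Smat (w0 w1 : R) : 'M[R]_3 :=
  \matrix_(i, j) (wv w0 w1 i * wv w0 w1 j +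
     (if (val i == 2%N) && (val j == 2%N) then 2^-1 else 0)).

Definition Sig (e : 'I_4) : 'M[R]_3 :=
  if val e == 0%N then Smat 1%:R 0%:R else if val e == 1%N then Smat 0%:R 1%:R
  else if val e == 2%N then Smat 1%:R 1%:R else Smat 1%:R (-1%:R).

Lemma Lvar_expand m (V : 'M[R]_(3, m)) S :
  Lvar V S = \sum_(a < m) \sum_(b < 3) \sum_(c < 3) V b a * S b c * V c a.
Proof.
rewrite /Lvar /mxtrace; apply: eq_bigr => a _.
rewrite !mxE exchange_big /=; apply: eq_bigr => c _.
rewrite !mxE mulr_suml; apply: eq_bigr => b _.
by rewrite !mxE.
Qed.

Lemma Lvar_S m (V : 'M[R]_(3, m)) w0 w1 :
  Lvar V (Smat w0 w1) =
  \sum_(a < m) ((w0 * V i0 a + w1 * V i1 a) ^+ 2 + V i2 a ^+ 2 * 2^-1).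
Proof.
rewrite Lvar_expand; apply: eq_bigr => a _.
rewrite !sum3 !mxE /wv /=.
ring.
Qed.

Lemma minLvar_eq m (V : 'M[R]_(3, m)) :
  minLvar Sig V = Num.min (Lvar V (Smat 1%:R 0%:R)) (Num.min (Lvar V (Smat 0%:R 1%:R))
    (Num.min (Lvar V (Smat 1%:R 1%:R)) (Num.min (Lvar V (Smat 1%:R (-1%:R))) (Lvar V (Smat 1%:R 0%:R))))).
Proof. by rewrite /minLvar !big_ord_recl big_ord0 /=. Qed.

Lemma ord2_cases (i : 'I_2) : i = c0 \/ i = c1.
Proof.
case: i => [[|[|n]] Hi]; [left|right|by []]; exact: val_inj.
Qed.

Lemma valid_Smat w0 w1 : valid_cov (Smat w0 w1).
Proof.
split; [|split].
- by apply/matrixP => i j; rewrite !mxE mulrC andbC.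
- move=> x.
  have -> : (x^T *m Smat w0 w1 *m x) 0 0 = Lvar x (Smat w0 w1).
    by rewrite /Lvar /mxtrace big_ord1.
  rewrite Lvar_S big_ord1.
  apply: addr_ge0; first exact: sqr_ge0.
  by apply: mulr_ge0; [exact: sqr_ge0| rewrite invr_ge0; lra].
- rewrite /mxtrace sum3 !mxE /wv /=.
  have : 0 <= w0 * w0 + w1 * w1 by nra.
  have : 0 < (2^-1 : R) by rewrite invr_gt0; lra.
  lra.
Qed.

Definition e3 : 'cV[R]_3 := \col_i (if val i == 2%N then 1 else 0).
Definition W : 'M[R]_(3, 2) := \matrix_(i, j) (if val i == val j then 1 else 0).

Theorem mainTheorem4 :
  exists (p k E : nat) (Sig : 'I_E.+1 -> 'M[R]_p),
    (0 < k)%nat /\ (k <= p)%nat /\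
    (forall e, valid_cov (Sig e)) /\
    forall V : 'M[R]_(p, k), sequential_output Sig V -> ~ minPCA_sol Sig V.
Proof.
exists 3%N, 2%N, 3%N, Sig.
split; first by [].
split; first by [].
split.
  move=> e; rewrite /Sig.
  by case: ifP => _; [|case: ifP => _; [|case: ifP => _]]; apply: valid_Smat.
move=> V Hseq [Hon Hopt]; rewrite /Defs.orthonormal in Hon.
have E00 := congr1 (fun M : 'M[R]_2 => M c0 c0) Hon.
have E01 := congr1 (fun M : 'M[R]_2 => M c0 c1) Hon.
have E11 := congr1 (fun M : 'M[R]_2 => M c1 c1) Hon.
rewrite /= !mxE sum3 !mxE /= in E00.
rewrite /= !mxE sum3 !mxE /= in E01.
rewrite /= !mxE sum3 !mxE /= in E11.
have [_ H0] := Hseq c0.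
have adm : admissible V c0 e3.
  split; last by [].
  apply/matrixP => i j; rewrite !ord1 !mxE sum3 !mxE /=; lra.
have := H0 e3 adm.
rewrite !minLvar_eq !Lvar_S !big_ord1 !mxE /=.
have z : forall w0 w1 : R, (w0 * 0 + w1 * 0) ^+ 2 + 1 ^+ 2 / 2 = 2^-1.
  by move=> w0 w1; ring.
rewrite !z !minxx !le_min => /and5P [h1 h2 h3 h4 _].
have [a0z a1z] : V i0 c0 = 0 /\ V i1 c0 = 0.
  set x := V i0 c0 in E00 h1 h2 h3 h4 *.
  set y := V i1 c0 in E00 h1 h2 h3 h4 *.
  set t := V i2 c0 in E00 h1 h2 h3 h4 *.
  rewrite (_ : (1%:R * x + 0%:R * y) ^+ 2 = x * x) in h1; last by ring.
  rewrite (_ : (0%:R * x + 1%:R * y) ^+ 2 = y * y) in h2; last by ring.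
  rewrite (_ : (1%:R * x + 1%:R * y) ^+ 2 = x * x + 2 * (x * y) + y * y) in h3; last by ring.
  rewrite (_ : (1%:R * x + (-1%:R) * y) ^+ 2 = x * x - 2 * (x * y) + y * y) in h4; last by ring.
  rewrite (_ : t ^+ 2 = 1 - x * x - y * y) in h1 h2 h3 h4; last by rewrite expr2; lra.
  have ex : x * x = y * y by lra.
  have hp : 0 <= (x * x + 2 * (x * y)) * (x * x - 2 * (x * y)).
    by apply: mulr_ge0; lra.
  have : (x * y) * (x * y) = (x * x) * (y * y) by ring.
  rewrite -ex => hxy.
  have h5 : (x * x) * (x * x) <= 0.
    have e : (x * x + 2 * (x * y)) * (x * x - 2 * (x * y)) =
             (x * x) * (x * x) - 4 * ((x * y) * (x * y)) by ring.
    rewrite e hxy in hp; lra.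
  have hX : (x * x) * (x * x) = 0.
    by apply/eqP; rewrite eq_le h5 /=; apply: mulr_ge0; rewrite -expr2 sqr_ge0.
  have hx : x * x = 0 by move/eqP: hX; rewrite mulf_eq0 orbb => /eqP.
  split.
    by move/eqP: hx; rewrite mulf_eq0 orbb => /eqP.
  by move: hx; rewrite ex => /eqP; rewrite mulf_eq0 orbb => /eqP.
rewrite a0z a1z in E00 E01.
have b2z : V i2 c1 = 0.
  have ha : V i2 c0 * V i2 c0 = 1 by move: E00; rewrite !mulr0 !add0r.
  have : V i2 c0 * (V i2 c0 * V i2 c1) = V i2 c1 by rewrite mulrA ha mul1r.
  move=> <-; rewrite (_ : V i2 c0 * V i2 c1 = 0); first by rewrite mulr0.
  by move: E01; rewrite !mul0r !add0r.
rewrite b2z in E11.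
have oW : Defs.orthonormal W.
  rewrite /Defs.orthonormal; apply/matrixP => i j.
  by case: (ord2_cases i) => ->; case: (ord2_cases j) => ->;
    rewrite !mxE sum3 !mxE /=; ring.
have := Hopt W oW.
rewrite !minLvar_eq !Lvar_S !sum2 !mxE /= a0z a1z b2z.
have ha : V i2 c0 ^+ 2 = 1 by move: E00; rewrite !mulr0 !add0r expr2.
have q : forall w0 w1 : R, (w0 * 1 + w1 * 0) ^+ 2 + 0 ^+ 2 / 2 +
   ((w0 * 0 + w1 * 1) ^+ 2 + 0 ^+ 2 / 2) = w0 * w0 + w1 * w1.
  by move=> w0 w1; ring.
have q2 : forall w0 w1 : R, (w0 * 0 + w1 * 0) ^+ 2 + V i2 c0 ^+ 2 / 2 +
   ((w0 * V i0 c1 + w1 * V i1 c1) ^+ 2 + 0 ^+ 2 / 2) =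
   2^-1 + (w0 * V i0 c1 + w1 * V i1 c1) ^+ 2.
  by move=> w0 w1; rewrite ha; ring.
rewrite !q !q2 => H.
match type of H with is_true (?a <= _) => have L : (GRing.one R) <= a end.
  rewrite !le_min ?mulrNN ?mulr1n ?mulr1 ?mul1r ?mulr0 ?addr0 ?add0r; apply/and5P; split; lra.
move: (le_trans L H); rewrite !le_min => /and5P [g1 g2 g3 g4 _].
set x := V i0 c1 in E11 g1 g2 g3 g4.
set y := V i1 c1 in E11 g1 g2 g3 g4.
rewrite (_ : (1%:R * x + 0%:R * y) ^+ 2 = x * x) in g1; last by ring.
rewrite (_ : (0%:R * x + 1%:R * y) ^+ 2 = y * y) in g2; last by ring.
rewrite (_ : (1%:R * x + 1%:R * y) ^+ 2 = x * x + 2 * (x * y) + y * y) in g3; last by ring.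
rewrite (_ : (1%:R * x + (-1%:R) * y) ^+ 2 = x * x - 2 * (x * y) + y * y) in g4; last by ring.
rewrite mulr0 addr0 in E11.
have hx : x * x = 2^-1 by lra.
have hy : y * y = 2^-1 by lra.
have hp : 0 <= (2^-1 + 2 * (x * y)) * (2^-1 - 2 * (x * y)) by apply: mulr_ge0; lra.
have e : (x * y) * (x * y) = (x * x) * (y * y) by ring.
rewrite hx hy in e.
have e2 : (2^-1 + 2 * (x * y)) * (2^-1 - 2 * (x * y)) = 2^-1 * 2^-1 - 4 * ((x * y) * (x * y)) by ring.
rewrite e2 e in hp.
move: hp; clear.
lra.
Qed.
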